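(* Let $r_1,r_2,\mu,a_{12},a_{13},a_{21},a_{31},d$ be positive with $r_1>a_{12}$ and $a_{31}>\mu$, let $c>c_*:=2\sqrt{d(a_{31}-\mu)}$ and $\rho=c^2/d$. Consider the system in $\mathbb{R}^4$ \[ \dot X_1=X_1\big(r_1(1-X_1)-a_{12}X_2-a_{13}Y\big),\quad \dot X_2=X_2\big(r_2(1-X_2)+a_{21}X_1\big),\quad \dot Y=\rho(Y-Z),\quad \dot Z=Y(-\mu+a_{31}X_1), \] with flow $\Phi_t$. Let \[ \sigma_1=\frac{\rho+\sqrt{\rho^2-4\rho(a_{31}-\mu)}}{2\rho},\qquad \sigma_2=\frac{\rho+\sqrt{\rho^2+4\rho\mu}}{2\rho}, \] \[ \Sigma=\Big\{(X_1,X_2,Y,Z):0\le X_1\le1,\ 0\le X_2\le 1+\tfrac{a_{21}}{r_2},\ Y\ge0,\ \sigma_1Y\le Z\le\sigma_2Y\Big\}, \] and let $Q_1,\dots,Q_5\subset\partial\Sigma$ be $Q_1=\Sigma\cap\{X_1=0\}$, $Q_2=\Sigma\cap\{X_1=1\}$, $Q_3=\Sigma\cap\{X_2=0\}$, $Q_4=\Sigma\cap\{X_2=1+a_{21}/r_2\}$, $Q_5=\{0<X_1<1,\ 0<X_2<1+a_{21}/r_2,\ Y=Z=0\}$. Then for any $p$ in the interior of $\Sigma$, the trajectory $\Phi_t(p)$ cannot leave $\Sigma$ through a point of $Q_1\cup Q_2\cup Q_3\cup Q_4\cup Q_5$ at any positive time.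
   Context: This system arises from traveling wave profiles $(U,V,W)(x+ct)$ of the reaction-diffusion system $u_t=r_1u(1-u)-a_{12}uv-a_{13}uw$, $v_t=r_2v(1-v)+a_{21}uv$, $w_t=d w_{xx}-\mu w+a_{31}uw$ via $X_1(t)=U(ct)$, $X_2(t)=V(ct)$, $Y(t)=W(ct)$, $Z(t)=W(ct)-\frac{d}{c}W'(ct)$. For $c>c_*$ one has $0<\sigma_1<1<\sigma_2$. *)

(* Defs.v *)
From Stdlib Require Import Reals.
Open Scope R_scope.

Definition rho_of (c d : R) : R := c ^ 2 / d.

Definition sigma1 (rho a31 mu : R) : R :=
  (rho + sqrt (rho ^ 2 - 4 * rho * (a31 - mu))) / (2 * rho).

Definition sigma2 (rho mu : R) : R :=
  (rho + sqrt (rho ^ 2 + 4 * rho * mu)) / (2 * rho).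

(* The closed set Sigma, with K = 1 + a21/r2. *)
Definition Sigma (s1 s2 K : R) (x1 x2 y z : R) : Prop :=
  0 <= x1 <= 1 /\ 0 <= x2 <= K /\ 0 <= y /\ s1 * y <= z <= s2 * y.

Definition interior4 (S : R -> R -> R -> R -> Prop) (x1 x2 y z : R) : Prop :=
  exists e, 0 < e /\
    forall u1 u2 u3 u4,
      Rabs (u1 - x1) < e -> Rabs (u2 - x2) < e ->
      Rabs (u3 - y) < e -> Rabs (u4 - z) < e -> S u1 u2 u3 u4.

Definition InQ (s1 s2 K : R) (x1 x2 y z : R) : Prop :=
  (Sigma s1 s2 K x1 x2 y z /\ x1 = 0) \/
  (Sigma s1 s2 K x1 x2 y z /\ x1 = 1) \/
  (Sigma s1 s2 K x1 x2 y z /\ x2 = 0) \/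
  (Sigma s1 s2 K x1 x2 y z /\ x2 = K) \/
  (0 < x1 < 1 /\ 0 < x2 < K /\ y = 0 /\ z = 0).

(* Main.v *)
Require Import Defs.
From Stdlib Require Import Reals.
Open Scope R_scope.
From Stdlib Require Import Lra.
Lemma dexpM (M t : R) : derivable_pt_lim (fun t => exp (M * t)) t (M * exp (M * t)).
Proof.
  assert (H := derivable_pt_lim_comp (fun t => M * t) exp t M (exp (M*t))).
  assert (H1 : derivable_pt_lim (fun t => M * t) t M).
  { assert (H2 := derivable_pt_lim_scal id M t 1 (derivable_pt_lim_id t)).
    rewrite Rmult_1_r in H2. exact H2. }
  specialize (H H1 (derivable_pt_lim_exp _)).
  unfold comp in H. replace (M * exp (M*t)) with (exp (M*t) * M) by ring. exact H.
Qed.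

Lemma pos_keep (f f' : R -> R) (M t0 : R) : 0 < t0 ->
  (forall t, 0 <= t <= t0 -> derivable_pt_lim f t (f' t)) ->
  (forall t, 0 <= t <= t0 -> f' t + M * f t >= 0) -> 0 < f 0 -> 0 < f t0.
Proof.
  intros ht0 Hd Hg H0.
  destruct (MVT_cor2 (fun t => f t * exp (M * t))
     (fun t => f' t * exp (M * t) + f t * (M * exp (M * t))) 0 t0 ht0) as [c [Hc1 Hc2]].
  { intros c Hc. apply (derivable_pt_lim_mult f (fun t => exp (M*t))).
    - apply Hd; auto.
    - apply dexpM. }
  assert (Hh : (f' c * exp (M * c) + f c * (M * exp (M * c))) * (t0 - 0) >= 0).
  { replace (f' c * exp (M * c) + f c * (M * exp (M * c))) with
       ((f' c + M * f c) * exp (M*c)) by ring.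
    apply Rle_ge. apply Rmult_le_pos; [apply Rmult_le_pos|lra].
    - apply Rge_le, Hg; lra.
    - left; apply exp_pos. }
  rewrite Rmult_0_r, exp_0 in Hc1.
  assert (0 < f t0 * exp (M * t0)) by lra.
  destruct (Rlt_or_le 0 (f t0)) as [h|h]; auto.
  assert (f t0 * exp (M*t0) <= 0); [|lra].
  assert (0 < exp (M*t0)) by apply exp_pos. nra.
Qed.

Lemma dminus (F : R -> R) (a t l : R) : derivable_pt_lim F t l ->
  derivable_pt_lim (fun t => a - F t) t (- l).
Proof.
  intro H. assert (H2 := derivable_pt_lim_minus (fct_cte a) F t 0 l (derivable_pt_lim_const a t) H).
  replace (- l) with (0 - l) by ring. exact H2.
Qed.


Theorem lemma4 (r1 r2 mu a12 a13 a21 a31 d c : R)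
  (hr1 : 0 < r1) (hr2 : 0 < r2) (hmu : 0 < mu) (ha12 : 0 < a12)
  (ha13 : 0 < a13) (ha21 : 0 < a21) (ha31 : 0 < a31) (hd : 0 < d)
  (hc0 : 0 < c) (hr1a12 : r1 > a12) (ha31mu : a31 > mu)
  (hc : c > 2 * sqrt (d * (a31 - mu)))
  (X1 X2 Y Z : R -> R) (T : R) (hT : 0 < T)
  (hode : forall t, 0 <= t < T ->
     derivable_pt_lim X1 t
       (X1 t * (r1 * (1 - X1 t) - a12 * X2 t - a13 * Y t)) /\
     derivable_pt_lim X2 t (X2 t * (r2 * (1 - X2 t) + a21 * X1 t)) /\
     derivable_pt_lim Y t (rho_of c d * (Y t - Z t)) /\
     derivable_pt_lim Z t (Y t * (- mu + a31 * X1 t)))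
  (hp : interior4
          (Sigma (sigma1 (rho_of c d) a31 mu) (sigma2 (rho_of c d) mu)
                 (1 + a21 / r2))
          (X1 0) (X2 0) (Y 0) (Z 0)) :
  forall t0, 0 < t0 < T ->
  ~ ((forall s, 0 <= s <= t0 ->
        Sigma (sigma1 (rho_of c d) a31 mu) (sigma2 (rho_of c d) mu)
              (1 + a21 / r2) (X1 s) (X2 s) (Y s) (Z s)) /\
     InQ (sigma1 (rho_of c d) a31 mu) (sigma2 (rho_of c d) mu)
         (1 + a21 / r2) (X1 t0) (X2 t0) (Y t0) (Z t0) /\
     (forall eps, 0 < eps -> exists s, t0 < s < t0 + eps /\ s < T /\
        ~ Sigma (sigma1 (rho_of c d) a31 mu) (sigma2 (rho_of c d) mu)
                (1 + a21 / r2) (X1 s) (X2 s) (Y s) (Z s))).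
Proof.
  intros t0 Ht0 [Hin [HQ _]].
  set (s1 := sigma1 (rho_of c d) a31 mu) in *.
  set (s2 := sigma2 (rho_of c d) mu) in *.
  set (K := 1 + a21 / r2) in *.
  set (rho := rho_of c d) in *.
  assert (Hrho : 0 < rho).
  { unfold rho, rho_of. apply Rdiv_lt_0_compat; [nra|lra]. }
  assert (HK : r2 * K = r2 + a21) by (unfold K; field; lra).
  destruct hp as [e [He Hbox]].
  assert (Ha : Rabs 0 < e) by (rewrite Rabs_R0; lra).
  assert (Hb : Rabs (-(e/2)) < e) by (rewrite Rabs_Ropp, Rabs_pos_eq; lra).
  assert (Hb' : Rabs (e/2) < e) by (rewrite Rabs_pos_eq; lra).
  assert (S1 := Hbox (X1 0 - e/2) (X2 0) (Y 0) (Z 0)).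
  assert (S2 := Hbox (X1 0 + e/2) (X2 0) (Y 0) (Z 0)).
  assert (S3 := Hbox (X1 0) (X2 0 - e/2) (Y 0) (Z 0)).
  assert (S4 := Hbox (X1 0) (X2 0 + e/2) (Y 0) (Z 0)).
  assert (S5 := Hbox (X1 0) (X2 0) (Y 0 - e/2) (Z 0)).
  replace (X1 0 - e / 2 - X1 0) with (-(e/2)) in S1 by ring.
  replace (X1 0 + e / 2 - X1 0) with (e/2) in S2 by ring.
  replace (X2 0 - e / 2 - X2 0) with (-(e/2)) in S3 by ring.
  replace (X2 0 + e / 2 - X2 0) with (e/2) in S4 by ring.
  replace (Y 0 - e / 2 - Y 0) with (-(e/2)) in S5 by ring.
  rewrite !Rminus_diag in S1, S2, S3, S4, S5.
  specialize (S1 Hb Ha Ha Ha). specialize (S2 Hb' Ha Ha Ha).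
  specialize (S3 Ha Hb Ha Ha). specialize (S4 Ha Hb' Ha Ha).
  specialize (S5 Ha Ha Hb Ha).
  unfold Sigma in S1, S2, S3, S4, S5.
  assert (Hd : forall t, 0 <= t <= t0 -> 0 <= t < T) by (intros; lra).
  destruct (continuity_ab_maj Y 0 t0) as [m [Hm _]]; [lra| |].
  { intros x Hx. apply derivable_continuous_pt.
    destruct (hode x (Hd x Hx)) as [_ [_ [HY _]]]. exact (exist _ _ HY). }
  unfold InQ in HQ.
  destruct HQ as [[_ Hq]|[[_ Hq]|[[_ Hq]|[[_ Hq]|[_ [_ [Hq _]]]]]]].
  - assert (P : 0 < X1 t0); [|lra].
    apply (pos_keep X1 (fun t => X1 t * (r1 * (1 - X1 t) - a12 * X2 t - a13 * Y t))
             (a12 * K + a13 * Y m) t0); try lra.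
    + intros t Ht. apply (hode t (Hd t Ht)).
    + intros t Ht. destruct (Hin t Ht) as [A [B [C D]]]. specialize (Hm t Ht).
      apply Rle_ge.
      replace (X1 t * (r1 * (1 - X1 t) - a12 * X2 t - a13 * Y t) + (a12 * K + a13 * Y m) * X1 t)
        with (X1 t * (r1 * (1 - X1 t) + a12 * (K - X2 t) + a13 * (Y m - Y t))) by ring.
      apply Rmult_le_pos; [lra|].
      assert (0 <= r1 * (1 - X1 t)) by (apply Rmult_le_pos; lra).
      assert (0 <= a12 * (K - X2 t)) by (apply Rmult_le_pos; lra).
      assert (0 <= a13 * (Y m - Y t)) by (apply Rmult_le_pos; lra).
      lra.
  - assert (P : 0 < 1 - X1 t0); [|lra].
    apply (pos_keep (fun t => 1 - X1 t) (fun t => - (X1 t * (r1 * (1 - X1 t) - a12 * X2 t - a13 * Y t)))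
             r1 t0); try lra.
    + intros t Ht. apply dminus, (hode t (Hd t Ht)).
    + intros t Ht. destruct (Hin t Ht) as [A [B [C D]]].
      apply Rle_ge.
      replace (- (X1 t * (r1 * (1 - X1 t) - a12 * X2 t - a13 * Y t)) + r1 * (1 - X1 t))
        with (r1 * (1 - X1 t) * (1 - X1 t) + X1 t * (a12 * X2 t + a13 * Y t)) by ring.
      assert (0 <= r1 * (1 - X1 t) * (1 - X1 t)) by (apply Rmult_le_pos; [apply Rmult_le_pos|]; lra).
      assert (0 <= X1 t * (a12 * X2 t + a13 * Y t)).
      { apply Rmult_le_pos; [lra|]. assert (0 <= a12 * X2 t) by (apply Rmult_le_pos; lra).
        assert (0 <= a13 * Y t) by (apply Rmult_le_pos; lra). lra. }
      lra.
  - assert (P : 0 < X2 t0); [|lra].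
    apply (pos_keep X2 (fun t => X2 t * (r2 * (1 - X2 t) + a21 * X1 t)) a21 t0); try lra.
    + intros t Ht. apply (hode t (Hd t Ht)).
    + intros t Ht. destruct (Hin t Ht) as [A [B [C D]]].
      apply Rle_ge.
      replace (X2 t * (r2 * (1 - X2 t) + a21 * X1 t) + a21 * X2 t)
        with (X2 t * ((r2 * K - r2 * X2 t) + a21 * X1 t)) by (assert (E: a21 = r2*K - r2) by lra; rewrite E; ring).
      apply Rmult_le_pos; [lra|].
      assert (0 <= r2 * (K - X2 t)) by (apply Rmult_le_pos; lra).
      assert (0 <= a21 * X1 t) by (apply Rmult_le_pos; lra). lra.
  - assert (P : 0 < K - X2 t0); [|lra].
    apply (pos_keep (fun t => K - X2 t) (fun t => - (X2 t * (r2 * (1 - X2 t) + a21 * X1 t)))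
             (K * r2) t0); try lra.
    + intros t Ht. apply dminus, (hode t (Hd t Ht)).
    + intros t Ht. destruct (Hin t Ht) as [A [B [C D]]].
      apply Rle_ge.
      replace (- (X2 t * (r2 * (1 - X2 t) + a21 * X1 t)) + K * r2 * (K - X2 t))
        with (X2 t * a21 * (1 - X1 t) + r2 * (K - X2 t) * (K - X2 t))
        by (assert (E: a21 = r2*K - r2) by lra; rewrite E; ring).
      assert (0 <= X2 t * a21 * (1 - X1 t)) by (apply Rmult_le_pos; [apply Rmult_le_pos|]; lra).
      assert (0 <= r2 * (K - X2 t) * (K - X2 t)) by (apply Rmult_le_pos; [apply Rmult_le_pos|]; lra).
      lra.
  - assert (P : 0 < Y t0); [|lra].
    apply (pos_keep Y (fun t => rho * (Y t - Z t)) (rho * s2) t0); try lra.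
    + intros t Ht. apply (hode t (Hd t Ht)).
    + intros t Ht. destruct (Hin t Ht) as [A [B [C D]]].
      apply Rle_ge.
      replace (rho * (Y t - Z t) + rho * s2 * Y t) with (rho * (Y t + (s2 * Y t - Z t))) by ring.
      apply Rmult_le_pos; lra.
Qed.
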